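(* For every $M\geq 1$, $g(M)-h(M)$ equals the number of partitions in $\mathcal G_1(M)$ that have no part equal to $1$.
   Context: The perimeter of a nonempty partition $\lambda$ with largest part $\lambda_1$ and $\ell(\lambda)$ parts is $\lambda_1+\ell(\lambda)-1$. $\mathcal G(M)$ is the set of partitions into odd parts with perimeter $M$, $\mathcal H(M)$ the set of partitions into distinct parts with perimeter $M$; $g(M)$ (resp. $h(M)$) is the total number of parts, summed over all partitions in $\mathcal G(M)$ (resp. $\mathcal H(M)$). $\mathcal G_1(M)$ is the set of partitions with perimeter $M$ in which exactly one distinct even integer occurs as a part (possibly with multiplicity greater than one) and all other parts are odd. *)

(* Defs.v *)
From mathcomp Require Import all_boot.
Set Implicit Arguments. Unset Strict Implicit. Unset Printing Implicit Defensive.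

Definition is_partition (l : seq nat) : bool :=
  sorted geq l && all (fun x => 0 < x) l.

(* Perimeter of a nonempty partition: largest part + number of parts - 1.
   (The empty partition is never counted: we require l nonempty below.) *)
Definition perimeter (l : seq nat) : nat := head 0 l + size l - 1.

Definition has_perimeter (M : nat) (l : seq nat) : bool :=
  is_partition l && (l != [::]) && (perimeter l == M).

Definition in_G (M : nat) (l : seq nat) : bool := has_perimeter M l && all odd l.
Definition in_H (M : nat) (l : seq nat) : bool := has_perimeter M l && uniq l.
Definition in_G1 (M : nat) (l : seq nat) : bool :=
  has_perimeter M l && (size (undup [seq x <- l | ~~ odd x]) == 1).

(* Every partition of perimeter M has all parts <= M and at most M parts,
   so it is the list of nonzero entries of a nonincreasing M-tuple with
   entries in {0..M}; this correspondence is bijective on nonincreasing tuples. *)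
Definition part_of_tuple (M : nat) (t : M.-tuple 'I_M.+1) : seq nat :=
  [seq x <- [seq val i | i <- t] | 0 < x].

Definition tuple_ok (M : nat) (t : M.-tuple 'I_M.+1) : bool :=
  sorted geq [seq val i | i <- t].

Definition sum_bounded_parts (M : nat) (P : pred (seq nat)) (F : seq nat -> nat) : nat :=
  \sum_(t : M.-tuple 'I_M.+1 | tuple_ok t && P (part_of_tuple t)) F (part_of_tuple t).

Definition g (M : nat) : nat := sum_bounded_parts M (in_G M) size.
Definition h (M : nat) : nat := sum_bounded_parts M (in_H M) size.
Definition G1_no_one (M : nat) : nat :=
  sum_bounded_parts M (fun l => in_G1 M l && (1 \notin l)) (fun _ => 1).

(* Main.v *)
Require Import Defs.
From mathcomp Require Import all_boot zify.
Set Implicit Arguments. Unset Strict Implicit. Unset Printing Implicit Defensive.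

Lemma geq_trans : transitive geq.
Proof. move=> x y z /= h1 h2; exact: leq_trans h2 h1. Qed.

Lemma sorted_split0 (s : seq nat) : sorted geq s ->
  s = [seq x <- s | 0 < x] ++ nseq (size s - size [seq x <- s | 0 < x]) 0.
Proof.
elim: s => [|x s IH] //= Hs.
have Hs' : sorted geq s by exact: path_sorted Hs.
case: x Hs => [|x] Hs /=.
  have /allP H := order_path_min geq_trans Hs.
  have -> : [seq x <- s | 0 < x] = [::].
    apply/eqP; rewrite -size_eq0 size_filter -leqn0 -(count_pred0 s).
    rewrite (eq_in_count (a2 := pred0)) // => y /H /=; rewrite leqn0 => /eqP ->.
    by [].
  rewrite /= ?subn0; congr (_ :: _).
  elim: s H {IH Hs Hs'} => [|y s IH] //= H.
  have -> : y = 0 by have := H y; rewrite inE eqxx /= leqn0 => /(_ isT) /eqP.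
  rewrite -IH // => z zs; by apply: H; rewrite inE zs orbT.
rewrite [in LHS]IH //.
Qed.

Definition pl (M : nat) : seq (seq nat) :=
  map (@part_of_tuple M) [seq t <- index_enum (M.-tuple 'I_M.+1) | tuple_ok t].

Lemma pl_uniq M : uniq (pl M).
Proof.
rewrite /pl map_inj_in_uniq ?filter_uniq ?index_enum_uniq //.
move=> t1 t2; rewrite !mem_filter => /andP[o1 _] /andP[o2 _] E.
have e1 := sorted_split0 o1; have e2 := sorted_split0 o2.
rewrite /part_of_tuple in E.
apply: val_inj; apply: (inj_map val_inj).
by rewrite e1 e2 E !size_map !size_tuple.
Qed.

Lemma sbp_pl M P F : sum_bounded_parts M P F = \sum_(l <- pl M | P l) F l.
Proof.
rewrite /sum_bounded_parts /pl big_map big_filter_cond.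
by rewrite unlock.
Qed.

Lemma hp_cons M a s : has_perimeter M (a :: s) =
  [&& 0 < a, path geq a s, all (fun x => 0 < x) s & a + size s == M].
Proof.
rewrite /has_perimeter /is_partition /perimeter /=.
rewrite subn1 addnS /=.
by case: (0 < a); case: (path geq a s); case: (all _ s).
Qed.

Lemma path_geq_nseq y k : path geq y (nseq k 0).
Proof. by elim: k y => [|k IH] y //=; rewrite IH andbT. Qed.

Lemma hp_pl M l : has_perimeter M l -> l \in pl M.
Proof.
case: l => [|a s]; first by rewrite /has_perimeter andbF.
rewrite hp_cons => /and4P[a0 ps sp /eqP E].
have al := order_path_min geq_trans ps.
have bnd : forall i, nth 0 (a :: s) i < M.+1.
  move=> i; case: (ltnP i (size (a::s))) => hi; last by rewrite nth_default.
  have : nth 0 (a :: s) i \in a :: s by exact: mem_nth.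
  rewrite inE => /orP[/eqP ->|]; first by lia.
  move/(allP al) => /=; lia.
pose t := [tuple (Ordinal (bnd i) : 'I_M.+1) | i < M].
have Et : [seq val i | i <- t] = (a :: s) ++ nseq (M - size (a::s)) 0.
  apply: (@eq_from_nth _ 0).
    by rewrite size_map size_tuple size_cat size_nseq /=; lia.
  move=> i; rewrite size_map size_tuple => hi.
  rewrite (nth_map ord0) ?size_tuple // -[i]/(nat_of_ord (Ordinal hi)) -tnth_nth tnth_mktuple /=.
  rewrite -cat_cons nth_cat; case: ifP => // h.
  rewrite nth_default ?nth_nseq ?if_same //; lia.
apply/mapP; exists t.
  rewrite mem_filter mem_index_enum andbT /tuple_ok Et /= cat_path ps /=.
  exact: path_geq_nseq.
rewrite /part_of_tuple Et filter_cat.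
have -> : [seq x <- nseq (M - size (a :: s)) 0 | 0 < x] = [::].
  by elim: (M - _) => //.
rewrite cats0; apply/esym/all_filterP; by rewrite /= a0.
Qed.

Definition En M (P : pred (seq nat)) := [seq l <- pl M | P l].

Lemma En_uniq M P : uniq (En M P).
Proof. exact/filter_uniq/pl_uniq. Qed.

Lemma En_mem M (P : pred (seq nat)) : (forall l, P l -> has_perimeter M l) ->
  forall l, (l \in En M P) = P l.
Proof.
move=> HP l; rewrite mem_filter; case E: (P l) => //=; exact/hp_pl/HP.
Qed.

Lemma sum_En M P F : sum_bounded_parts M P F = \sum_(l <- En M P) F l.
Proof. by rewrite sbp_pl /En big_filter. Qed.

Lemma En_perm M (P : pred (seq nat)) (L : seq (seq nat)) F :
  (forall l, P l -> has_perimeter M l) -> uniq L -> (forall l, (l \in L) = P l) ->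
  \sum_(l <- En M P) F l = \sum_(l <- L) F l.
Proof.
move=> HP uL ML; apply: perm_big; apply: uniq_perm => //; first exact: En_uniq.
by move=> l; rewrite En_mem // ML.
Qed.

Definition dup (l : seq nat) := head 0 l :: l.
Definition bmp (l : seq nat) := if l is a :: s then a.+2 :: s else [::].

Lemma dup_inj : injective dup. Proof. by move=> x y [_ ->]. Qed.
Lemma bmp_inj : injective bmp.
Proof. by case=> [|a s] [|b t] //= [-> ->]. Qed.

Lemma cat_uniq_sep (A B : seq (seq nat)) (Q : pred (seq nat)) :
  uniq A -> uniq B -> all Q A -> all (predC Q) B -> uniq (A ++ B).
Proof.
move=> uA uB /allP QA /allP QB; rewrite cat_uniq uA uB andbT /=.
apply/hasPn => x /QB /= nQ; apply/negP => /QA; by rewrite (negbTE nQ).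
Qed.

Lemma odd_lt2 y a : odd y -> odd a -> y < a -> y.+2 <= a.
Proof.
move=> oy oa; have := odd_double_half y; have := odd_double_half a.
rewrite oy oa; lia.
Qed.

Lemma odd_pos a : odd a -> 0 < a. Proof. by case: a. Qed.

Lemma in_G_cons N a s : in_G N (a :: s) =
  [&& 0 < a, path geq a s, all (fun x => 0 < x) s, a + size s == N, odd a & all odd s].
Proof. by rewrite /in_G hp_cons /= !andbA. Qed.

Lemma G_split N l : in_G N.+2 l ->
  (exists2 l', in_G N.+1 l' & l = dup l') \/ (exists2 l', in_G N l' & l = bmp l').
Proof.
case: l => [|a s]; first by rewrite /in_G /has_perimeter andbF.
rewrite in_G_cons => /and5P[a0 ps sp /eqP E /andP[oa os]].
case: s ps sp E os => [|y s] /= ps sp E os.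
  right; case: a a0 oa E ps => [|[|b]] //= a0 oa E _.
  exists [:: b] => //; rewrite in_G_cons /= andbT -(negbK (odd b)) oa; lia.
move: ps sp os => /andP[ya ps] /andP[y0 sp] /andP[oy os].
case: (ltngtP y a) ya => // [ya _ | ay _].
  right; have := odd_lt2 oy oa ya; case: a a0 oa E ya => [|[|b]] //= a0 oa E ya yb.
  exists [:: b, y & s] => //; rewrite in_G_cons /= -(negbK (odd b)) oa ps sp os oy y0 /=.
  apply/and3P; split => //; lia.
subst y; left; exists (a :: s) => //; rewrite in_G_cons /= ps sp os oa a0 /=; lia.
Qed.

Lemma G_dup N l : in_G N.+1 l -> in_G N.+2 (dup l).
Proof.
case: l => [|a s]; first by rewrite /in_G /has_perimeter andbF.
rewrite /dup /= !in_G_cons /= leqnn /= => /and5P[-> -> -> /eqP E /andP[-> ->]].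
rewrite !andbT; apply/eqP; lia.
Qed.

Lemma G_bmp N l : in_G N l -> in_G N.+2 (bmp l).
Proof.
case: l => [|a s]; first by rewrite /in_G /has_perimeter andbF.
rewrite /bmp !in_G_cons /= => /and5P[_ ps -> /eqP E /andP[oa ->]].
rewrite negbK oa !andbT /=.
case: s ps E => [|y s] //= ps E; first by apply/eqP; lia.
case/andP: ps => ya ->; rewrite andbT; apply/andP; split; [lia | apply/eqP; lia].
Qed.

Lemma rec3 N (P : pred (seq nat)) N1 (P1 : pred (seq nat)) N2 (P2 : pred (seq nat))
  N3 (P3 : pred (seq nat)) f1 f2 f3 (Q1 Q2 : pred (seq nat)) F :
  (forall l, P l -> has_perimeter N l) ->
  (forall l, P1 l -> has_perimeter N1 l) ->
  (forall l, P2 l -> has_perimeter N2 l) ->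
  (forall l, P3 l -> has_perimeter N3 l) ->
  injective f1 -> injective f2 -> injective f3 ->
  (forall l, P1 l -> Q1 (f1 l)) -> (forall l, P2 l -> ~~ Q1 (f2 l)) ->
  (forall l, P3 l -> ~~ Q1 (f3 l)) ->
  (forall l, P2 l -> Q2 (f2 l)) -> (forall l, P3 l -> ~~ Q2 (f3 l)) ->
  (forall l, P1 l -> P (f1 l)) -> (forall l, P2 l -> P (f2 l)) ->
  (forall l, P3 l -> P (f3 l)) ->
  (forall l, P l -> [\/ exists2 l', P1 l' & l = f1 l',
                        exists2 l', P2 l' & l = f2 l' |
                        exists2 l', P3 l' & l = f3 l']) ->
  \sum_(l <- En N P) F l = \sum_(l <- En N1 P1) F (f1 l) +
     \sum_(l <- En N2 P2) F (f2 l) + \sum_(l <- En N3 P3) F (f3 l).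
Proof.
move=> H H1 H2 H3 i1 i2 i3 q1 q12 q13 q2 q23 p1 p2 p3 bk.
rewrite (@En_perm N P (map f1 (En N1 P1) ++ map f2 (En N2 P2) ++ map f3 (En N3 P3))) //.
- by rewrite !big_cat /= !big_map addnA.
- apply: (@cat_uniq_sep _ _ Q1); rewrite ?map_inj_uniq ?En_uniq //.
  + apply: (@cat_uniq_sep _ _ Q2); rewrite ?map_inj_uniq ?En_uniq //.
    * by apply/allP => x /mapP[y]; rewrite En_mem // => /q2 ? ->.
    * by apply/allP => x /mapP[y]; rewrite En_mem // => /q23 ? ->.
  + by apply/allP => x /mapP[y]; rewrite En_mem // => /q1 ? ->.
  + rewrite all_cat; apply/andP; split.
    * by apply/allP => x /mapP[y]; rewrite En_mem // => /q12 ? ->.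
    * by apply/allP => x /mapP[y]; rewrite En_mem // => /q13 ? ->.
move=> l; rewrite !mem_cat; apply/idP/idP.
  case/or3P => /mapP[y]; rewrite En_mem // => ? ->; by [apply: p1|apply: p2|apply: p3].
case/bk => [][y Py ->]; rewrite (mem_map i1, mem_map i2, mem_map i3) En_mem // Py ?orbT //.
Qed.

Definition pre (l : seq nat) := (head 0 l).+1 :: l.
Definition inch (l : seq nat) := if l is a :: s then a.+1 :: s else [::].

Lemma pre_inj : injective pre.
Proof. by move=> x y [_ ->]. Qed.
Lemma inch_inj : injective inch.
Proof. by case=> [|a s] [|b t] //= [-> ->]. Qed.

Lemma in_H_cons N a s : in_H N (a :: s) =
  [&& 0 < a, path geq a s, all (fun x => 0 < x) s, a + size s == N, a \notin s & uniq s].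
Proof. by rewrite /in_H hp_cons /= !andbA. Qed.

Lemma path_all a s : path geq a s -> forall x, x \in s -> x <= a.
Proof. by move/(order_path_min geq_trans)/allP. Qed.

Lemma H_split N l : in_H N.+2 l ->
  (exists2 l', in_H N l' & l = pre l') \/ (exists2 l', in_H N.+1 l' & l = inch l').
Proof.
case: l => [|a s]; first by rewrite /in_H /has_perimeter andbF.
rewrite in_H_cons => /and5P[a0 ps sp /eqP E /andP[nas us]].
case: s ps sp E nas us => [|y s] /= ps sp E nas us.
  right; case: a a0 E ps => [|b] //= a0 E _.
  exists [:: b] => //; rewrite in_H_cons /= andbT; lia.
move: ps sp nas us => /andP[ya ps] /andP[y0 sp]; rewrite inE negb_or => /andP[nay nas] /andP[nys us].
have sy := path_all ps.
case: (ltngtP y.+1 a) => [ya1|ay|ay]; [| by lia |].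
  right; case: a a0 E ya ya1 nay nas => [|b] //= a0 E ya ya1 nay nas.
  exists [:: b, y & s] => //; rewrite in_H_cons /= ps sp us nys y0 /= inE negb_or.
  have -> : b \notin s by apply/negP => bs; have := sy _ bs; lia.
  have -> : b != y by lia.
  have -> : y <= b by lia.
  have -> : 0 < b by lia.
  rewrite /=; apply/eqP; lia.
subst a; left; exists (y :: s) => //; rewrite in_H_cons /= ps sp us nys y0 /=; lia.
Qed.

Lemma H_pre N l : in_H N l -> in_H N.+2 (pre l).
Proof.
case: l => [|a s]; first by rewrite /in_H /has_perimeter andbF.
rewrite /pre !in_H_cons /= => /and5P[a0 ps -> /eqP E /andP[-> ->]].
rewrite ps a0 /= inE negb_or !andbT leqnSn /=.
have sa := path_all ps; apply/and3P; split; [lia| lia |].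
by apply/negP => bs; have := sa _ bs; lia.
Qed.

Lemma H_inch N l : in_H N.+1 l -> in_H N.+2 (inch l).
Proof.
case: l => [|a s]; first by rewrite /in_H /has_perimeter andbF.
rewrite /inch !in_H_cons /= => /and5P[a0 ps -> /eqP E /andP[_ ->]].
have sa := path_all ps; rewrite !andbT /=.
apply/and3P; split.
- by case: s ps {sa E} => //= y s /andP[ya ->]; rewrite andbT; lia.
- apply/eqP; lia.
- by apply/negP => bs; have := sa _ bs; lia.
Qed.

Lemma oddE x : odd x -> x = (x./2).*2.+1.
Proof. by move=> o; rewrite -{1}(odd_double_half x) o. Qed.
Lemma evenE x : ~~ odd x -> x = (x./2).*2.
Proof. by move=> o; rewrite -{1}(odd_double_half x) (negbTE o). Qed.

Definition Kc (l : seq nat) := size (undup [seq x <- l | ~~ odd x]) == 1.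
Definition PK N l := in_G1 N l && (1 \notin l).
Definition Ko N l := PK N l && odd (head 0 l).
Definition Ke N l := PK N l && ~~ odd (head 0 l).
Definition G3 N l := in_G N l && (1 \notin l).

Lemma PK_cons N a s : PK N (a :: s) =
  [&& 0 < a, path geq a s, all (fun x => 0 < x) s, a + size s == N, Kc (a :: s),
      a != 1 & 1 \notin s].
Proof. by rewrite /PK /in_G1 hp_cons /= inE negb_or /Kc !andbA [1 == a]eq_sym. Qed.

Lemma G3_cons N a s : G3 N (a :: s) =
  [&& 0 < a, path geq a s, all (fun x => 0 < x) s, a + size s == N, odd a, all odd s,
      a != 1 & 1 \notin s].
Proof. by rewrite /G3 in_G_cons inE negb_or !andbA [1 == a]eq_sym. Qed.

Lemma Kc_odd a s : odd a -> Kc (a :: s) = Kc s.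
Proof. by move=> oa; rewrite /Kc /= oa. Qed.

Lemma Kc_dup a s : Kc (a :: a :: s) = Kc (a :: s).
Proof.
rewrite /Kc /=; case: (odd a) => //=.
by rewrite inE eqxx.
Qed.

Lemma Kc_nil : Kc [::] = false. Proof. by []. Qed.

Lemma Kc_even a s : ~~ odd a -> Kc (a :: s) -> forall x, x \in s -> odd x || (x == a).
Proof.
move=> ea; rewrite /Kc /= ea /= => K x xs; case ox: (odd x) => //=.
case nxa: (x == a) => //.
have u := undup_uniq [seq x <- s | ~~ odd x].
have xin : x \in undup [seq x <- s | ~~ odd x] by rewrite mem_undup mem_filter ox xs.
move: K; case: ifP => ain.
  have ain' : a \in undup [seq x <- s | ~~ odd x] by rewrite mem_undup.
  have := uniq_leq_size (s1 := [:: a; x]) _ _ => /(_ (undup [seq x <- s | ~~ odd x])).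
  rewrite /= inE eq_sym nxa => /(_ isT) H /eqP E.
  suff : 2 <= size (undup [seq x <- s | ~~ odd x]) by rewrite E.
  by apply: H => z; rewrite !inE => /orP[] /eqP ->.
move=> /eqP [] /eqP; rewrite size_eq0 => /eqP E; by rewrite E in xin.
Qed.

Lemma Kc_even_intro a s : ~~ odd a -> all odd s -> Kc (a :: s).
Proof.
move=> ea os; rewrite /Kc /= ea /=.
have -> : [seq x <- s | ~~ odd x] = [::].
  by elim: s os => //= x s IH /andP[-> /IH].
by [].
Qed.

Ltac spl := repeat (apply/andP; split); try done; try lia.

Lemma Ko_split N l : Ko N.+2 l ->
  [\/ (exists2 l', Ko N.+1 l' & l = dup l'), (exists2 l', Ko N l' & l = bmp l')
    | (exists2 l', Ke N l' & l = pre l')].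
Proof.
case: l => [|a s]; first by rewrite /Ko /PK /in_G1 /has_perimeter andbF.
rewrite /Ko PK_cons /= => /andP[/and5P[a0 ps sp /eqP E /and3P[K a1 n1s]] oa].
case: s ps sp E K n1s => [|y s] /= ps sp E K n1s; first by rewrite Kc_odd in K.
move: ps sp n1s => /andP[ya ps] /andP[y0 sp]; rewrite inE negb_or => /andP[y1 n1s].
case: (ltngtP y a) => [ya'|ay|ay]; [| by lia |].
  case: (ltngtP y.+1 a) => [ya1|ay1|ay1]; [| by lia |].
    apply: Or32; case: a a0 E K a1 oa ya ya' ya1 => [|[|b]] //= a0 E K a1 oa ya ya' ya1.
    rewrite negbK in oa.
    exists [:: b, y & s] => //; rewrite /Ko PK_cons /= inE negb_or.
    have ob2 : odd b.+2 by rewrite /= negbK.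
    rewrite (Kc_odd _ ob2) in K; rewrite (Kc_odd _ oa); spl.
  apply: Or33; exists (y :: s); last by rewrite /pre ay1.
  have {}oa : ~~ odd y by rewrite -ay1 /= in oa.
  have oa' : odd a by rewrite -ay1 /= oa.
  rewrite (Kc_odd _ oa') in K; rewrite /Ke PK_cons /= oa; spl.
subst y; apply: Or31; exists (a :: s) => //.
rewrite /Ko PK_cons /= Kc_dup in K *; spl.
Qed.

Lemma Ko_dup N l : Ko N.+1 l -> Ko N.+2 (dup l).
Proof.
case: l => [|a s]; first by rewrite /Ko /PK /in_G1 /has_perimeter andbF.
rewrite /dup /Ko !PK_cons /= Kc_dup inE negb_or => /andP[/and5P[a0 ps sp /eqP E /and3P[K a1 n1s]] oa].
spl.
Qed.

Lemma Ko_bmp N l : Ko N l -> Ko N.+2 (bmp l).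
Proof.
case: l => [|a s]; first by rewrite /Ko /PK /in_G1 /has_perimeter andbF.
rewrite /bmp /Ko !PK_cons /= => /andP[/and5P[a0 ps sp /eqP E /and3P[K a1 n1s]] oa].
have ob2 : odd a.+2 by rewrite /= negbK.
rewrite (Kc_odd _ ob2) -(Kc_odd _ oa) K negbK oa.
case: s ps sp E n1s {K} => [|y s] /= ps sp E n1s; spl.
Qed.

Lemma Ke_pre N l : Ke N l -> Ko N.+2 (pre l).
Proof.
case: l => [|a s]; first by rewrite /Ke /PK /in_G1 /has_perimeter andbF.
rewrite /pre /Ke /Ko !PK_cons /= inE negb_or => /andP[/and5P[a0 ps sp /eqP E /and3P[K a1 n1s]] ea].
have oa1 : odd a.+1 by rewrite /= ea.
rewrite (Kc_odd _ oa1) K ea; spl.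
Qed.

Lemma Ke_dup N l : Ke N.+1 l -> Ke N.+2 (dup l).
Proof.
case: l => [|a s]; first by rewrite /Ke /PK /in_G1 /has_perimeter andbF.
rewrite /dup /Ke !PK_cons /= Kc_dup inE negb_or => /andP[/and5P[a0 ps sp /eqP E /and3P[K a1 n1s]] oa].
spl.
Qed.

Lemma G3_inch N l : G3 N.+1 l -> Ke N.+2 (inch l).
Proof.
case: l => [|a s]; first by rewrite /G3 /in_G /has_perimeter andbF.
rewrite /inch /Ke PK_cons G3_cons /= => /and5P[a0 ps sp /eqP E /and4P[oa os a1 n1s]].
have ea : ~~ odd a.+1 by rewrite /= oa.
rewrite ea Kc_even_intro //.
have := oddE oa.
case: s ps sp E os n1s => [|y s] /= ps sp E os n1s; spl.
Qed.

Lemma G3_dup N l : G3 N.+1 l -> G3 N.+2 (dup l).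
Proof.
case: l => [|a s]; first by rewrite /G3 /in_G /has_perimeter andbF.
rewrite /dup !G3_cons /= inE negb_or => /and5P[a0 ps sp /eqP E /and4P[oa os a1 n1s]].
spl.
Qed.

Lemma G3_bmp N l : G3 N l -> G3 N.+2 (bmp l).
Proof.
case: l => [|a s]; first by rewrite /G3 /in_G /has_perimeter andbF.
rewrite /bmp !G3_cons /= => /and5P[a0 ps sp /eqP E /and4P[oa os a1 n1s]].
rewrite negbK oa.
case: s ps sp E os n1s => [|y s] /= ps sp E os n1s; spl.
Qed.

Lemma Ke_split N l : Ke N.+2 l ->
  [\/ (exists2 l', Ke N.+1 l' & l = dup l'), (exists2 l', G3 N.+1 l' & l = inch l')
    | (exists2 l', (l' == [:: 2]) && (N == 0) & l = l')].
Proof.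
case: l => [|a s]; first by rewrite /Ke /PK /in_G1 /has_perimeter andbF.
rewrite /Ke PK_cons /= => /andP[/and5P[a0 ps sp /eqP E /and3P[K a1 n1s]] ea].
have Ks := Kc_even ea K.
have ha := evenE ea.
case: s ps sp E K n1s Ks => [|y s] /= ps sp E K n1s Ks.
  case: (a =P 2) => [a2|a2].
    subst a; apply: Or33; exists [:: 2] => //; spl.
  apply: Or32; exists [:: a.-1]; last by rewrite /inch prednK.
  rewrite G3_cons /=; have -> : odd a.-1 by rewrite -{1}(prednK a0) /= in ea; rewrite negbK in ea.
  spl.
move: ps sp n1s => /andP[ya ps] /andP[y0 sp]; rewrite inE negb_or => /andP[y1 n1s].
case: (ltngtP y a) => [ya'|ay|ay]; [| by lia |].
  have al : all odd (y :: s).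
    apply/allP => x xin; have := Ks x xin; case: (odd x) => //= /eqP xa.
    move: xin; rewrite inE => /orP[/eqP|/(path_all ps)]; lia.
  move: (al) => /= /andP[oy os].
  have hy := oddE oy.
  apply: Or32; exists [:: a.-1, y & s]; last by rewrite /inch prednK.
  rewrite G3_cons /= os oy ps sp inE negb_or n1s y0.
  have -> : odd a.-1 by rewrite -{1}(prednK a0) /= in ea; rewrite negbK in ea.
  spl.
subst y; apply: Or31; exists (a :: s) => //.
rewrite /Ke PK_cons /= ea -Kc_dup K; spl.
Qed.

Lemma G3_split N l : G3 N.+2 l ->
  [\/ (exists2 l', G3 N.+1 l' & l = dup l'), (exists2 l', G3 N l' & l = bmp l')
    | (exists2 l', (l' == [:: 3]) && (N == 1) & l = l')].
Proof.
case: l => [|a s]; first by rewrite /G3 /in_G /has_perimeter andbF.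
rewrite G3_cons /= => /and5P[a0 ps sp /eqP E /and4P[oa os a1 n1s]].
have ha := oddE oa.
case: s ps sp E os n1s => [|y s] /= ps sp E os n1s.
  case: (a =P 3) => [a3|a3].
    subst a; apply: Or33; exists [:: 3] => //; spl.
  apply: Or32; case: a a0 oa E ha a1 a3 => [|[|b]] //= a0 oa E ha a1 a3.
  rewrite negbK in oa; exists [:: b] => //; rewrite G3_cons /= oa; spl.
move: ps sp n1s os => /andP[ya ps] /andP[y0 sp]; rewrite inE negb_or => /andP[y1 n1s] /andP[oy os].
case: (ltngtP y a) => [ya'|ay|ay]; [| by lia |].
  have h2 := odd_lt2 oy oa ya'; have hy := oddE oy.
  apply: Or32; case: a a0 oa E ha a1 ya ya' h2 => [|[|b]] //= a0 oa E ha a1 ya ya' h2.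
  rewrite negbK in oa; exists [:: b, y & s] => //; rewrite G3_cons /= oa oy os ps sp inE negb_or n1s.
  spl.
subst y; apply: Or31; exists (a :: s) => //.
rewrite G3_cons /= oa os; spl.
Qed.

Lemma En_pred0 N F : \sum_(l <- En N pred0) F l = 0.
Proof. by rewrite /En filter_pred0 big_nil. Qed.

Lemma hpG N l : in_G N l -> has_perimeter N l. Proof. by case/andP. Qed.
Lemma hpH N l : in_H N l -> has_perimeter N l. Proof. by case/andP. Qed.
Lemma hpK N l : PK N l -> has_perimeter N l. Proof. by case/andP => /andP[]. Qed.
Lemma hpKo N l : Ko N l -> has_perimeter N l. Proof. by case/andP => /hpK. Qed.
Lemma hpKe N l : Ke N l -> has_perimeter N l. Proof. by case/andP => /hpK. Qed.
Lemma hpG3 N l : G3 N l -> has_perimeter N l. Proof. by case/andP => /hpG. Qed.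
Lemma hpsing k N l : (l == [:: k]) && (N == 0) -> 0 < k -> has_perimeter k l.
Proof. by case/andP => /eqP -> _ k0; rewrite hp_cons /= k0 addn0 eqxx. Qed.
Lemma hpsing1 k N l : (l == [:: k]) && (N == 1) -> 0 < k -> has_perimeter k l.
Proof. by case/andP => /eqP -> _ k0; rewrite hp_cons /= k0 addn0 eqxx. Qed.
Lemma hp0 N l : @pred0 (seq nat) l -> has_perimeter N l. Proof. by []. Qed.

Definition Qd (l : seq nat) := nth 0 l 1 == head 0 l.
Definition Qp (l : seq nat) := nth 0 l 1 == (head 0 l).-1.

Lemma Qd_dup l : Qd (dup l). Proof. by rewrite /Qd /dup; case: l => //= a s; exact: eqxx. Qed.

Lemma G_rec N F : \sum_(l <- En N.+2 (in_G N.+2)) F l =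
  \sum_(l <- En N.+1 (in_G N.+1)) F (dup l) + \sum_(l <- En N (in_G N)) F (bmp l).
Proof.
rewrite (@rec3 N.+2 (in_G N.+2) N.+1 (in_G N.+1) N (in_G N) 0 pred0 dup bmp id Qd predT F)
  ?En_pred0 ?addn0 //.
- exact: hpG. - exact: hpG. - exact: hpG.
- exact: dup_inj. - exact: bmp_inj.
- by move=> l _; exact: Qd_dup.
- case=> [|a s]; rewrite ?in_G_cons // => /and3P[_ ps _]; rewrite /Qd /=.
  case: s ps => [|y s] /= => [_|/andP[ya _]]; lia.
- exact: G_dup. - exact: G_bmp.
- move=> l /G_split [] [l' ? ->]; [apply: Or31 | apply: Or32]; by exists l'.
Qed.

Lemma Qp_pre l : Qp (pre l). Proof. by rewrite /Qp /pre; case: l => //= a s; exact: eqxx. Qed.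

Lemma H_rec N F : \sum_(l <- En N.+2 (in_H N.+2)) F l =
  \sum_(l <- En N (in_H N)) F (pre l) + \sum_(l <- En N.+1 (in_H N.+1)) F (inch l).
Proof.
rewrite (@rec3 N.+2 (in_H N.+2) N (in_H N) N.+1 (in_H N.+1) 0 pred0 pre inch id Qp predT F)
  ?En_pred0 ?addn0 //.
- exact: hpH. - exact: hpH. - exact: hpH.
- exact: pre_inj. - exact: inch_inj.
- by move=> l _; exact: Qp_pre.
- case=> [|a s]; rewrite ?in_H_cons // => /and5P[a0 ps _ _ /andP[nas _]]; rewrite /Qp /=.
  case: s ps nas => [|y s] /= => [_|/andP[ya _]]; first lia.
  rewrite inE negb_or => /andP[ay _]; lia.
- exact: H_pre. - exact: H_inch.
- move=> l /H_split [] [l' ? ->]; [apply: Or31 | apply: Or32]; by exists l'.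
Qed.

Lemma Ko_rec N F : \sum_(l <- En N.+2 (Ko N.+2)) F l =
  \sum_(l <- En N.+1 (Ko N.+1)) F (dup l) + \sum_(l <- En N (Ko N)) F (bmp l)
  + \sum_(l <- En N (Ke N)) F (pre l).
Proof.
rewrite (@rec3 N.+2 (Ko N.+2) N.+1 (Ko N.+1) N (Ko N) N (Ke N) dup bmp pre Qd (predC Qp) F) //.
- exact: hpKo. - exact: hpKo. - exact: hpKo. - exact: hpKe.
- exact: dup_inj. - exact: bmp_inj. - exact: pre_inj.
- by move=> l _; exact: Qd_dup.
- case=> [|a s]; rewrite /Ko ?PK_cons // => /andP[/and3P[_ ps _] _]; rewrite /Qd /=.
  case: s ps => [|y s] /= => [_|/andP[ya _]]; lia.
- case=> [|a s]; rewrite /Qd //= => _; lia.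
- case=> [|a s]; rewrite /Ko ?PK_cons // => /andP[/and3P[_ ps _] _]; rewrite /Qp /=.
  case: s ps => [|y s] /= => [_|/andP[ya _]]; lia.
- by move=> l _ /=; rewrite Qp_pre.
- exact: Ko_dup. - exact: Ko_bmp. - exact: Ke_pre.
- move=> l /Ko_split [] [l' ? ->]; [apply: Or31 | apply: Or32 | apply: Or33]; by exists l'.
Qed.

Lemma Ke_rec N F : \sum_(l <- En N.+2 (Ke N.+2)) F l =
  \sum_(l <- En N.+1 (Ke N.+1)) F (dup l) + \sum_(l <- En N.+1 (G3 N.+1)) F (inch l)
  + \sum_(l <- En 2 (fun l => (l == [:: 2]) && (N == 0))) F l.
Proof.
rewrite (@rec3 N.+2 (Ke N.+2) N.+1 (Ke N.+1) N.+1 (G3 N.+1) 2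
   (fun l => (l == [:: 2]) && (N == 0)) dup inch id Qd (fun l => 3 < head 0 l) F) //.
- exact: hpKe. - exact: hpKe. - exact: hpG3. - by move=> l /hpsing; apply.
- exact: dup_inj. - exact: inch_inj.
- by move=> l _; exact: Qd_dup.
- case=> [|a s]; rewrite ?G3_cons // => /and3P[_ ps _]; rewrite /Qd /=.
  case: s ps => [|y s] /= => [_|/andP[ya _]]; lia.
- by move=> l /andP[/eqP -> _].
- case=> [|a s]; rewrite ?G3_cons // => /and5P[_ _ _ _ /and4P[oa _ a1 _]] /=.
  have := oddE oa; lia.
- by move=> l /andP[/eqP -> _].
- exact: Ke_dup. - exact: G3_inch.
- by move=> l /andP[/eqP -> /eqP ->].
- move=> l /Ke_split [] [l' ? ->]; [apply: Or31 | apply: Or32 | apply: Or33]; by exists l'.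
Qed.

Lemma G3_rec N F : \sum_(l <- En N.+2 (G3 N.+2)) F l =
  \sum_(l <- En N.+1 (G3 N.+1)) F (dup l) + \sum_(l <- En N (G3 N)) F (bmp l)
  + \sum_(l <- En 3 (fun l => (l == [:: 3]) && (N == 1))) F l.
Proof.
rewrite (@rec3 N.+2 (G3 N.+2) N.+1 (G3 N.+1) N (G3 N) 3
   (fun l => (l == [:: 3]) && (N == 1)) dup bmp id Qd (fun l => 3 < head 0 l) F) //.
- exact: hpG3. - exact: hpG3. - exact: hpG3. - by move=> l /hpsing1; apply.
- exact: dup_inj. - exact: bmp_inj.
- by move=> l _; exact: Qd_dup.
- case=> [|a s]; rewrite ?G3_cons // => /and3P[_ ps _]; rewrite /Qd /=.
  case: s ps => [|y s] /= => [_|/andP[ya _]]; lia.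
- by move=> l /andP[/eqP -> _].
- case=> [|a s]; rewrite ?G3_cons // => /and5P[_ _ _ _ /and4P[oa _ a1 _]] /=.
  have := oddE oa; lia.
- by move=> l /andP[/eqP -> _].
- exact: G3_dup. - exact: G3_bmp.
- by move=> l /andP[/eqP -> /eqP ->].
- move=> l /G3_split [] [l' ? ->]; [apply: Or31 | apply: Or32 | apply: Or33]; by exists l'.
Qed.

Lemma En0 (P : pred (seq nat)) F : (forall l, P l -> has_perimeter 0 l) ->
  \sum_(l <- En 0 P) F l = 0.
Proof.
move=> HP; rewrite (@En_perm 0 P [::]) ?big_nil // => l; rewrite in_nil.
case Pl: (P l) => //; move: (HP l Pl); case: l {Pl} => [|a s]; first by rewrite /has_perimeter andbF.
rewrite hp_cons => /and4P[? _ _ ?]; lia.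
Qed.

Lemma En1 (P : pred (seq nat)) F : (forall l, P l -> has_perimeter 1 l) ->
  \sum_(l <- En 1 P) F l = if P [:: 1] then F [:: 1] else 0.
Proof.
move=> HP; rewrite (@En_perm 1 P (if P [:: 1] then [:: [:: 1]] else [::])) //.
- by case: (P [:: 1]); rewrite ?big_nil ?big_seq1.
- by case: (P [:: 1]).
move=> l; case Pl: (P l).
  move: (HP l Pl); case: l Pl => [|a s] Pl; first by rewrite /has_perimeter andbF.
  rewrite hp_cons => /and4P[a0 _ _ /eqP E].
  have a1 : a = 1 by lia.
  move: E; rewrite a1 add1n => -[] /size0nil s0.
  subst a s.
  by rewrite Pl inE.
case: ifP => // P1; rewrite inE; apply/negP => /eqP E; by rewrite E P1 in Pl.
Qed.

Lemma Ensing k b F : 0 < k ->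
  \sum_(l <- En k (fun l => (l == [:: k]) && b)) F l = if b then F [:: k] else 0.
Proof.
move=> k0; rewrite (@En_perm k _ (if b then [:: [:: k]] else [::])) //.
- by case: b; rewrite ?big_nil ?big_seq1.
- by move=> l /andP[/eqP -> _]; rewrite hp_cons /= k0 addn0 eqxx.
- by case: b.
by move=> l; case: b; rewrite ?inE ?andbT ?andbF.
Qed.

Lemma numeric (g cg h ch ko ke c3 : nat -> nat) :
  g 0 = 0 -> cg 0 = 0 -> h 0 = 0 -> ch 0 = 0 -> ko 0 = 0 -> ke 0 = 0 -> c3 0 = 0 ->
  g 1 = 1 -> cg 1 = 1 -> h 1 = 1 -> ch 1 = 1 -> ko 1 = 0 -> ke 1 = 0 -> c3 1 = 0 ->
  (forall N, g N.+2 = g N.+1 + cg N.+1 + g N) ->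
  (forall N, cg N.+2 = cg N.+1 + cg N) ->
  (forall N, h N.+2 = h N + ch N + h N.+1) ->
  (forall N, ch N.+2 = ch N + ch N.+1) ->
  (forall N, ko N.+2 = ko N.+1 + ko N + ke N) ->
  (forall N, ke N.+2 = ke N.+1 + c3 N.+1 + (N == 0)) ->
  (forall N, c3 N.+2 = c3 N.+1 + c3 N + (N == 1)) ->
  forall N, g N = h N + (ko N + ke N).
Proof.
move=> g0 cg0 h0 ch0 ko0 ke0 c30 g1 cg1 h1 ch1 ko1 ke1 c31 rg rcg rh rch rko rke rc3.
have chg : forall N, ch N = cg N /\ ch N.+1 = cg N.+1.
  elim=> [|N [IH1 IH2]]; first by rewrite ch0 cg0 ch1 cg1.
  by split => //; rewrite rch rcg IH1 IH2 addnC.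
have c3g : forall N, c3 N.+2 = cg N /\ c3 N.+3 = cg N.+1.
  elim=> [|N [IH1 IH2]].
    by rewrite rc3 c31 c30 cg0 rc3 rc3 c31 c30 cg1.
  by split => //; rewrite rc3 IH1 IH2 rcg /= addn0 addnC.
have key : forall N, cg N.+1 = ch N + c3 N.+1 + (N == 0).
  case=> [|N]; first by rewrite cg1 ch0 c31.
  rewrite rcg (proj1 (chg N.+1)) (proj1 (c3g N)) /=; lia.
have main : forall N, g N = h N + (ko N + ke N) /\ g N.+1 = h N.+1 + (ko N.+1 + ke N.+1).
  elim=> [|N [IH1 IH2]]; first by rewrite g0 h0 ko0 ke0 g1 h1 ko1 ke1.
  split => //; rewrite rg rh rko rke IH1 IH2 key; lia.
by move=> N; case: (main N).
Qed.

Lemma size_dup l : size (dup l) = size l + 1. Proof. by rewrite addn1. Qed.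
Lemma size_pre l : size (pre l) = size l + 1. Proof. by rewrite addn1. Qed.
Lemma size_bmp l : size (bmp l) = size l. Proof. by case: l. Qed.
Lemma size_inch l : size (inch l) = size l. Proof. by case: l. Qed.

Theorem mainTheorem7 (M : nat) : 1 <= M -> g M = h M + G1_no_one M.
Proof.
move=> _.
rewrite /g /h /G1_no_one !sum_En.
have -> : \sum_(l <- En M (fun l => in_G1 M l && (1 \notin l))) 1 =
          \sum_(l <- En M (Ko M)) 1 + \sum_(l <- En M (Ke M)) 1.
  rewrite /En (bigID (fun l => odd (head 0 l))) /= !big_filter_cond.
  by congr (_ + _); apply: eq_bigl => i /=; rewrite /Ko /Ke /PK ?andbT.
pose gg N := \sum_(l <- En N (in_G N)) size l.
pose cg N := \sum_(l <- En N (in_G N)) 1.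
pose hh N := \sum_(l <- En N (in_H N)) size l.
pose ch N := \sum_(l <- En N (in_H N)) 1.
pose ko N := \sum_(l <- En N (Ko N)) 1.
pose ke N := \sum_(l <- En N (Ke N)) 1.
pose c3 N := \sum_(l <- En N (G3 N)) 1.
suff : gg M = hh M + (ko M + ke M) by [].
apply: (@numeric gg cg hh ch ko ke c3).
- exact/En0/hpG. - exact/En0/hpG. - exact/En0/hpH. - exact/En0/hpH.
- exact/En0/hpKo. - exact/En0/hpKe. - exact/En0/hpG3.
- by rewrite /gg En1 //; exact: hpG.
- by rewrite /cg En1 //; exact: hpG.
- by rewrite /hh En1 //; exact: hpH.
- by rewrite /ch En1 //; exact: hpH.
- by rewrite /ko En1 //; exact: hpKo.
- by rewrite /ke En1 //; exact: hpKe.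
- by rewrite /c3 En1 //; exact: hpG3.
- move=> N; rewrite /gg /cg G_rec.
  under eq_bigr do rewrite size_dup.
  under [X in _ + X]eq_bigr do rewrite size_bmp.
  by rewrite big_split.
- by move=> N; rewrite /cg G_rec.
- move=> N; rewrite /hh /ch H_rec.
  under eq_bigr do rewrite size_pre.
  under [X in _ + X]eq_bigr do rewrite size_inch.
  by rewrite big_split /=.
- by move=> N; rewrite /ch H_rec addnC.
- by move=> N; rewrite /ko /ke Ko_rec.
- by move=> N; rewrite /ke /c3 Ke_rec Ensing.
- by move=> N; rewrite /c3 G3_rec Ensing.
Qed.
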